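(* Let $l\ge 1$ and let $a_1,\dots,a_{2l+1}$ be a chain of simple closed curves on an oriented surface ($a_i$ and $a_{i+1}$ meet transversely once, $a_i\cap a_j=\emptyset$ for $|i-j|\ge2$). Define $\phi_l=a_{2l+1}^{\,l+1}a_{2l-1}^{\,l}\cdots a_5^{3}a_3^{2}a_1$. Let $D=d_1\cdots d_{k_1}$ and $E=e_1\cdots e_{k_2}$ be arbitrary products of right-handed Dehn twists, and write ${}_{\psi}(D)={}_{\psi}(d_1)\cdots{}_{\psi}(d_{k_1})$, ${}_{\psi}(E)={}_{\psi}(e_1)\cdots{}_{\psi}(e_{k_2})$. Then (a) $D\cdot a_{2l}\cdots a_2a_1\cdot a_{2l+1}\cdots a_2a_1\cdot E\ \sim_C\ {}_{\phi_l}(D)\cdot(a_{2l+1}^{\,l+1}\, a_{2l}\cdots a_2a_1)\cdot(b_{2l}\cdots b_4 b_2)\cdot{}_{\phi_l}(E)$; (b) $D\cdot a_1a_2\cdots a_{2l+1}\cdot a_1a_2\cdots a_{2l}\cdot E\ \sim_C\ {}_{\phi_l^{-1}}(D)\cdot(\bar b_2\bar b_4\cdots\bar b_{2l})\cdot(a_1a_2\cdots a_{2l}\,a_{2l+1}^{\,l+1})\cdot{}_{\phi_l^{-1}}(E)$.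
   Context: $a_i$ denotes the right-handed Dehn twist $t_{a_i}$; for a mapping class $f$ and a Dehn twist $t_x$, ${}_f(x)$ denotes $t_{f(x)}=ft_xf^{-1}$. $b_i=t_{a_{i+1}}(a_i)$ and $\bar b_i=t_{a_{i+1}}^{-1}(a_i)$. Words of Dehn twists are related by $\sim_C$ if one is obtained from the other by a finite sequence of elementary transformations ($\cdots t_vt_w\cdots\leftrightarrow\cdots t_{t_v(w)}t_v\cdots$) and conjugations, where a conjugation moves the last letter of a word to the front (or vice versa), i.e. cyclic permutation, equivalently simultaneous conjugation of all letters. *)

(* Defs.v *)
From mathcomp Require Import all_boot.
From Stdlib Require Import Relation_Operators.

Set Implicit Arguments.
Unset Strict Implicit.
Unset Printing Implicit Defensive.

(* Composition convention: [mcg_mul f g] is "first g, then f". *)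
Record surface := Surface {
  Curve : Type;
  MCG : Type;
  mcg_mul : MCG -> MCG -> MCG;
  mcg_one : MCG;
  mcg_inv : MCG -> MCG;
  mcg_mulA : forall f g h, mcg_mul f (mcg_mul g h) = mcg_mul (mcg_mul f g) h;
  mcg_mul1 : forall f, mcg_mul mcg_one f = f;
  mcg_mulV : forall f, mcg_mul (mcg_inv f) f = mcg_one;
  act : MCG -> Curve -> Curve;
  act_one : forall x, act mcg_one x = x;
  act_mul : forall f g x, act (mcg_mul f g) x = act f (act g x);
  (* right-handed Dehn twist about a curve *)
  tw : Curve -> MCG;
  tw_conj : forall f x, tw (act f x) = mcg_mul (mcg_mul f (tw x)) (mcg_inv f);
  disjoint : Curve -> Curve -> Prop;
  meet_once : Curve -> Curve -> Prop;
  disjoint_sym : forall x y, disjoint x y -> disjoint y x;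
  meet_once_sym : forall x y, meet_once x y -> meet_once y x;
  disjoint_act : forall f x y, disjoint (act f x) (act f y) <-> disjoint x y;
  meet_once_act : forall f x y, meet_once (act f x) (act f y) <-> meet_once x y;
  tw_disjoint : forall x y, disjoint x y -> act (tw x) y = y;
  tw_self : forall x, act (tw x) x = x;
  tw_meet_once : forall x y, meet_once x y -> act (tw x) (act (tw y) x) = y
}.

Section Words.
Variable S : surface.

Definition mcg_prod (s : seq (MCG S)) : MCG S := foldr (@mcg_mul S) (@mcg_one S) s.
Definition mcg_pow (g : MCG S) (n : nat) : MCG S := mcg_prod (nseq n g).

(* A word of right-handed Dehn twists t_{x_1} ... t_{x_k} is recorded by the
   sequence of its curves [x_1; ...; x_k]. *)
Definition word := seq (Curve S).

Inductive hstep : word -> word -> Prop :=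
  | hstep_elem (p q : word) (v w : Curve S) :
      hstep (p ++ v :: w :: q) (p ++ act (tw v) w :: v :: q)
  | hstep_conj (s : word) (x : Curve S) :
      hstep (rcons s x) (x :: s).

Definition simC : word -> word -> Prop := clos_refl_sym_trans word hstep.

Definition conjw (f : MCG S) (D : word) : word := map (act f) D.

End Words.

Definition down S (a : nat -> Curve S) (k : nat) : word S := map a (rev (iota 1 k)).
Definition up S (a : nat -> Curve S) (k : nat) : word S := map a (iota 1 k).

Definition bcurve S (a : nat -> Curve S) (i : nat) : Curve S :=
  act (tw (a i.+1)) (a i).
Definition bbar S (a : nat -> Curve S) (i : nat) : Curve S :=
  act (mcg_inv (tw (a i.+1))) (a i).

(* phi_l = a_{2l+1}^{l+1} a_{2l-1}^l ... a_3^2 a_1 *)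
Definition phi S (a : nat -> Curve S) (l : nat) : MCG S :=
  mcg_prod [seq mcg_pow (tw (a k.*2.+1)) k.+1 | k <- rev (iota 0 l.+1)].

Definition is_chain S (a : nat -> Curve S) (n : nat) : Prop :=
  (forall i, 1 <= i -> i < n -> meet_once (a i) (a i.+1)) /\
  (forall i j, 1 <= i -> i.+2 <= j -> j <= n -> disjoint (a i) (a j)).

(* Main.v *)
Require Import Defs.
From mathcomp Require Import all_boot.
From mathcomp Require Import zify.
From Stdlib Require Import Relation_Operators.
Require Import Defs.
Set Implicit Arguments.
Unset Strict Implicit.
Unset Printing Implicit Defensive.
Section Gen.
Variable S : surface.
Local Notation C := (Curve S).
Local Notation mul := (@mcg_mul S).
Local Notation one := (@mcg_one S).
Local Notation inv := (@mcg_inv S).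
Local Notation tT v := (act (tw v)).
Local Notation tI v := (act (mcg_inv (tw v))).

Lemma mulgV (f : MCG S) : mul f (inv f) = one.
Proof.
transitivity (mul (mul (inv (inv f)) (inv f)) (mul f (inv f))).
  by rewrite mcg_mulV mcg_mul1.
rewrite -mcg_mulA (mcg_mulA (inv f) f (inv f)) mcg_mulV mcg_mul1.
exact: mcg_mulV.
Qed.

Lemma actK (f : MCG S) c : act (inv f) (act f c) = c.
Proof. by rewrite -act_mul mcg_mulV act_one. Qed.
Lemma actVK (f : MCG S) c : act f (act (inv f) c) = c.
Proof. by rewrite -act_mul mulgV act_one. Qed.
Lemma act_inj (f : MCG S) : injective (act f).
Proof. by move=> c d H; rewrite -(actK f c) H actK. Qed.
Lemma act_invM (f g : MCG S) c : act (inv (mul f g)) c = act (inv g) (act (inv f) c).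
Proof. by apply: (@act_inj (mul f g)); rewrite actVK act_mul actVK actVK. Qed.
Lemma act_inv1 c : act (inv one) c = c.
Proof. by rewrite -[LHS](@act_one S) actVK. Qed.
Lemma act_pow (g : MCG S) n c : act (mcg_pow g n) c = iter n (act g) c.
Proof.
elim: n c => [|n IH] c; rewrite /mcg_pow /mcg_prod /=; first by rewrite act_one.
by rewrite act_mul -IH.
Qed.
Lemma act_inv_pow (g : MCG S) n c : act (inv (mcg_pow g n)) c = iter n (act (inv g)) c.
Proof.
elim: n c => [|n IH] c; first by rewrite /mcg_pow /mcg_prod /= act_inv1.
have -> : mcg_pow g n.+1 = mul g (mcg_pow g n) by [].
by rewrite act_invM IH iterSr.
Qed.
Lemma invfix (f : MCG S) c : act f c = c -> act (inv f) c = c.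
Proof. by move=> H; rewrite -{1}H actK. Qed.
Lemma fixI (x y : C) : disjoint x y -> tI x y = y.
Proof. by move=> H; apply: invfix; apply: tw_disjoint. Qed.
Lemma commT (u v c : C) : disjoint u v -> tT u (tT v c) = tT v (tT u c).
Proof.
move=> H; have E := tw_conj (tw u) v; rewrite (tw_disjoint H) in E.
by rewrite {2}E !act_mul actK.
Qed.
Lemma iter_fix (f : C -> C) n c : f c = c -> iter n f c = c.
Proof. by move=> H; elim: n => //= n ->. Qed.
Lemma iter_comm (f g : C -> C) n c : (forall d, f (g d) = g (f d)) ->
  iter n f (g c) = g (iter n f c).
Proof. by move=> H; elim: n => //= n ->. Qed.
Lemma inv_comm (f g : MCG S) : (forall c, act f (act g c) = act g (act f c)) ->
  forall c, act (inv f) (act (inv g) c) = act (inv g) (act (inv f) c).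
Proof.
move=> H c; apply: (@act_inj g); apply: (@act_inj f).
by rewrite H !actVK.
Qed.
Lemma iterTK (x : C) n c : iter n (tI x) (iter n (tT x) c) = c.
Proof. by elim: n c => // n IH c; rewrite iterSr iterS actK IH. Qed.
Lemma iterIK (x : C) n c : iter n (tT x) (iter n (tI x) c) = c.
Proof. by elim: n c => // n IH c; rewrite iterSr iterS actVK IH. Qed.

Lemma sC_refl (s : word S) : simC s s.
Proof. exact: rst_refl. Qed.
Lemma sC_sym (s t : word S) : simC s t -> simC t s.
Proof. exact: rst_sym. Qed.
Lemma sC_trans (t s u : word S) : simC s t -> simC t u -> simC s u.
Proof. exact: rst_trans. Qed.
Lemma sC_rot (s : word S) x : simC (s ++ [:: x]) (x :: s).
Proof. rewrite cats1; apply: rst_step; exact: hstep_conj. Qed.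

Definition Lq (M M' : word S) := forall P Q, simC (P ++ M ++ Q) (P ++ M' ++ Q).
Lemma Lq_refl M : Lq M M.
Proof. by move=> P Q; apply: sC_refl. Qed.
Lemma Lq_sym M M' : Lq M M' -> Lq M' M.
Proof. by move=> H P Q; apply: sC_sym. Qed.
Lemma Lq_trans M1 M M' : Lq M M1 -> Lq M1 M' -> Lq M M'.
Proof. by move=> H1 H2 P Q; apply: sC_trans (H1 P Q) (H2 P Q). Qed.
Lemma Lq_app M M' P Q X Y : Lq M M' -> X = P ++ M ++ Q -> Y = P ++ M' ++ Q -> simC X Y.
Proof. by move=> H -> ->. Qed.
Lemma Lq_ctx M M' P Q X Y : Lq M M' -> X = P ++ M ++ Q -> Y = P ++ M' ++ Q -> Lq X Y.
Proof. by move=> H -> -> P' Q'; rewrite -!catA catA [in X in simC _ X]catA; apply: H. Qed.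
Lemma Lq_elem v w : Lq [:: v; w] [:: tT v w; v].
Proof. by move=> P Q; apply: rst_step; apply: hstep_elem. Qed.
Lemma Lq_elemV d v : Lq [:: d; v] [:: v; tI v d].
Proof. apply: Lq_sym; have := Lq_elem v (tI v d); by rewrite actVK. Qed.

Lemma move_right x E : Lq (x :: E) (map (tT x) E ++ [:: x]).
Proof.
elim: E => [|e E IH] /=; first exact: Lq_refl.
apply: (Lq_trans (M1:=tT x e :: x :: E)).
  by apply: (Lq_ctx (P:=[::]) (Q:=E) (Lq_elem x e)).
by apply: (Lq_ctx (P:=[:: tT x e]) (Q:=[::]) IH); rewrite ?cats0.
Qed.
Lemma move_left x D : Lq (D ++ [:: x]) (x :: map (tI x) D).
Proof.
elim: D => [|d D IH] /=; first exact: Lq_refl.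
apply: (Lq_trans (M1:=d :: x :: map (tI x) D)).
  by apply: (Lq_ctx (P:=[:: d]) (Q:=[::]) IH); rewrite ?cats0.
by apply: (Lq_ctx (P:=[::]) (Q:=map (tI x) D) (Lq_elemV d x)).
Qed.
Lemma passR c V : Lq (c :: V) (V ++ [:: foldl (fun c w => tI w c) c V]).
Proof.
elim: V c => [|w V IH] c /=; first exact: Lq_refl.
apply: (Lq_trans (M1:=w :: tI w c :: V)).
  by apply: (Lq_ctx (P:=[::]) (Q:=V) (Lq_elemV c w)).
by apply: (Lq_ctx (P:=[:: w]) (Q:=[::]) (IH (tI w c))); rewrite ?cats0.
Qed.
Lemma passL V c : Lq (V ++ [:: c]) (foldr (fun w c => tT w c) c V :: V).
Proof.
elim: V => [|w V IH] /=; first exact: Lq_refl.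
apply: (Lq_trans (M1:=w :: foldr (fun w c => tT w c) c V :: V)).
  by apply: (Lq_ctx (P:=[:: w]) (Q:=[::]) IH); rewrite ?cats0.
by apply: (Lq_ctx (P:=[::]) (Q:=V) (Lq_elem _ _)).
Qed.
Lemma foldl_nseq (x : C) n v : foldl (fun c w => tI w c) v (nseq n x) = iter n (tI x) v.
Proof. by elim: n v => //= n IH v; rewrite IH -iterSr. Qed.
Lemma foldr_nseq (x : C) n v : foldr (fun w c => tT w c) v (nseq n x) = iter n (tT x) v.
Proof. by elim: n => //= n ->. Qed.
Lemma nseqSr (x : C) n : nseq n.+1 x = nseq n x ++ [:: x].
Proof. by elim: n => //= n <-. Qed.

Definition Rq (M : word S) (F : C -> C) (M' : word S) :=
  forall D E, simC (D ++ M ++ E) (map F D ++ M' ++ map F E).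
Lemma Rq_ext M F G M' : F =1 G -> Rq M F M' -> Rq M G M'.
Proof. by move=> e H D E; rewrite -!(eq_map e). Qed.
Lemma Rq_eq M F M' N N' : Rq M F M' -> M = N -> M' = N' -> Rq N F N'.
Proof. by move=> H <- <-. Qed.
Lemma map_comp' (F G : C -> C) (D : word S) : map (fun c => G (F c)) D = map G (map F D).
Proof. by elim: D => //= d D ->. Qed.
Lemma Rq_trans M F M1 G M' : Rq M F M1 -> Rq M1 G M' -> Rq M (fun c => G (F c)) M'.
Proof.
move=> H1 H2 D E; rewrite (map_comp' F G D) (map_comp' F G E); exact: sC_trans (H1 D E) (H2 _ _).
Qed.
Lemma Rq_Lq_l M M1 F M' : Lq M M1 -> Rq M1 F M' -> Rq M F M'.
Proof. by move=> H1 H2 D E; apply: sC_trans (H1 D E) (H2 D E). Qed.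
Lemma Rq_Lq_r M M1 F M' : Rq M F M1 -> Lq M1 M' -> Rq M F M'.
Proof. by move=> H1 H2 D E; apply: sC_trans (H1 D E) (H2 _ _). Qed.
Lemma Rq_prefix P M F M' : Rq M F M' -> Rq (P ++ M) F (map F P ++ M').
Proof. by move=> H D E; have := H (D ++ P) E; rewrite map_cat -!catA. Qed.
Lemma Rq_suffix Q M F M' : Rq M F M' -> Rq (M ++ Q) F (M' ++ map F Q).
Proof. by move=> H D E; have := H D (Q ++ E); rewrite map_cat -!catA. Qed.
Lemma rotR M x : Rq (M ++ [:: x]) (tT x) (x :: M).
Proof.
move=> D E.
apply: (sC_trans (t:=D ++ M ++ map (tT x) E ++ [:: x])).
  by apply: (Lq_app (P:=D ++ M) (Q:=[::]) (move_right x E)); rewrite ?cats0 -?catA.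
apply: (sC_trans (t:=x :: D ++ M ++ map (tT x) E)).
  by have := sC_rot (D ++ M ++ map (tT x) E) x; rewrite -!catA.
by apply: (Lq_app (P:=[::]) (Q:=M ++ map (tT x) E) (move_right x D)); rewrite -?catA.
Qed.
Lemma rotL M x : Rq (x :: M) (tI x) (M ++ [:: x]).
Proof.
move=> D E.
apply: (sC_trans (t:=x :: map (tI x) D ++ M ++ E)).
  by apply: (Lq_app (P:=[::]) (Q:=M ++ E) (move_left x D)); rewrite -?catA.
apply: (sC_trans (t:=(map (tI x) D ++ M ++ E) ++ [:: x])).
  by apply: sC_sym; apply: sC_rot.
by apply: (Lq_app (P:=map (tI x) D ++ M) (Q:=[::]) (move_left x E)); rewrite ?cats0 -?catA.
Qed.
Lemma rot_n_R z n M : Rq (M ++ nseq n z) (iter n (tT z)) (nseq n z ++ M).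
Proof.
elim: n M => [|n IH] M.
  by move=> D E; rewrite cats0 !map_id; apply: sC_refl.
apply: (Rq_ext (F:=fun c => iter n (tT z) (tT z c))).
  by move=> c; rewrite iterSr.
apply: (Rq_eq (Rq_trans (rotR (M ++ nseq n z) z) (IH (z :: M)))).
  by rewrite nseqSr catA.
by rewrite nseqSr -catA.
Qed.
Lemma rot_n_L z n M : Rq (nseq n z ++ M) (iter n (tI z)) (M ++ nseq n z).
Proof.
elim: n M => [|n IH] M.
  by move=> D E; rewrite cats0 !map_id; apply: sC_refl.
apply: (Rq_ext (F:=fun c => iter n (tI z) (tI z c))).
  by move=> c; rewrite iterSr.
have H1 : Rq (z :: nseq n z ++ M) (tI z) (nseq n z ++ M ++ [:: z]).
  by apply: (Rq_eq (rotL (nseq n z ++ M) z)); rewrite ?catA.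
apply: (Rq_eq (Rq_trans H1 (IH (M ++ [:: z])))) => //.
by rewrite -catA.
Qed.

End Gen.
Section Core.
Variable S : surface.
Local Notation C := (Curve S).
Local Notation tT v := (act (tw v)).
Local Notation tI v := (act (mcg_inv (tw v))).
Variables x y z : C.
Hypotheses (mxy : meet_once x y) (myz : meet_once y z) (dxz : disjoint x z).

Lemma coreA n : Rq ([:: iter n (tT x) y; x; z; iter n (tT x) y] ++ nseq n x)
  (iter n.+1 (tT z)) (nseq n.+1 z ++ [:: y; x; tT z y]).
Proof.
set y' := iter n (tT x) y.
have dzx : disjoint z x by apply: disjoint_sym.
have myx : meet_once y x by apply: meet_once_sym.
have mzy : meet_once z y by apply: meet_once_sym.
have L1 : Lq ([:: y'; x; z; y'] ++ nseq n x) ([:: y'; x; z] ++ nseq n x ++ [:: y]).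
  apply: (Lq_ctx (P:=[:: y'; x; z]) (Q:=[::]) (passR y' (nseq n x))).
  - by rewrite cats0.
  - by rewrite cats0 foldl_nseq /y' iterTK.
have L2 : Lq ([:: y'; x; z] ++ nseq n x ++ [:: y]) (y' :: nseq n.+1 x ++ [:: z; y]).
  apply: (Lq_ctx (P:=[:: y'; x]) (Q:=[:: y]) (move_right z (nseq n x))).
  - by [].
  - by rewrite map_nseq (tw_disjoint dzx) -catA.
have L3 : Lq (y' :: nseq n.+1 x ++ [:: z; y]) (nseq n x ++ [:: y; x; z; y]).
  apply: (Lq_trans (M1 := (nseq n.+1 x ++ [:: tI x y]) ++ [:: z; y])).
    apply: (Lq_ctx (P:=[::]) (Q:=[:: z; y]) (passR y' (nseq n.+1 x))) => //.
    by rewrite foldl_nseq iterS /y' iterTK.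
  apply: (Lq_ctx (P:=nseq n x) (Q:=[:: z; y]) (Lq_elem x (tI x y))).
    by rewrite nseqSr -!catA.
  by rewrite actVK.
have Ez : tI y (tI z (tI x (tI y x))) = z.
  have e1 : tI y x = tT x y by rewrite -{1}(tw_meet_once myx) actK.
  have e2 : tI z y = tT y z by rewrite -{1}(tw_meet_once mzy) actK.
  by rewrite e1 actK e2 actK.
have L5 : forall m, Lq (nseq m x ++ [:: y; x; z; y]) ([:: y; x; z; y] ++ nseq m z).
  elim=> [|m IH]; first by rewrite cats0; exact: Lq_refl.
  have H0 : Lq (x :: [:: y; x; z; y]) ([:: y; x; z; y] ++ [:: z]).
    apply: (Lq_ctx (P:=[::]) (Q:=[::]) (passR x [:: y; x; z; y])) => //.
    by rewrite /= Ez.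
  apply: (Lq_trans (M1 := nseq m x ++ [:: y; x; z; y] ++ [:: z])).
    apply: (Lq_ctx (P:=nseq m x) (Q:=[::]) H0).
      by rewrite cats0 nseqSr -catA.
    by rewrite cats0.
  apply: (Lq_ctx (P:=[::]) (Q:=[:: z]) IH).
    by rewrite catA.
  by rewrite nseqSr catA.
have L6 : Lq (nseq n z ++ [:: y; x; z; y]) ((nseq n z ++ [:: y; x; tT z y]) ++ [:: z]).
  apply: (Lq_ctx (P:=nseq n z ++ [:: y; x]) (Q:=[::]) (Lq_elem z y)).
    by rewrite cats0 -catA.
  by rewrite cats0 -!catA.
apply: (Rq_Lq_l (M1 := [:: y; x; z; y] ++ nseq n z)).
  exact: (Lq_trans L1 (Lq_trans L2 (Lq_trans L3 (L5 n)))).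
apply: (Rq_ext (F := fun c => tT z (iter n (tT z) c))) => //.
exact: (Rq_trans (Rq_Lq_r (rot_n_R z n _) L6) (rotR _ z)).
Qed.

Lemma coreB n : Rq (nseq n x ++ [:: iter n (tI x) y; z; x; iter n (tI x) y])
  (iter n.+1 (tI z)) ([:: tI z y; x; y] ++ nseq n.+1 z).
Proof.
set y' := iter n (tI x) y.
have dzx : disjoint z x by apply: disjoint_sym.
have K1 : Lq (nseq n x ++ [:: y'; z; x; y']) (y :: nseq n x ++ [:: z; x; y']).
  apply: (Lq_ctx (P:=[::]) (Q:=[:: z; x; y']) (passL (nseq n x) y')).
    by rewrite -catA.
  by rewrite foldr_nseq /y' iterIK.
have K2 : Lq (y :: nseq n x ++ [:: z; x; y']) ([:: y; z] ++ nseq n.+1 x ++ [:: y']).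
  apply: (Lq_ctx (P:=[:: y]) (Q:=[:: x; y']) (move_left z (nseq n x))).
    by rewrite -catA.
  by rewrite map_nseq (fixI dzx) nseqSr -!catA.
have K3 : Lq ([:: y; z] ++ nseq n.+1 x ++ [:: y']) ([:: y; z; x; y] ++ nseq n x).
  apply: (Lq_trans (M1 := [:: y; z] ++ (tT x y :: nseq n.+1 x))).
    apply: (Lq_ctx (P:=[:: y; z]) (Q:=[::]) (passL (nseq n.+1 x) y')).
      by rewrite cats0.
    by rewrite cats0 foldr_nseq iterS /y' iterIK.
  apply: (Lq_ctx (P:=[:: y; z]) (Q:=nseq n x) (Lq_elemV (tT x y) x)) => //.
  by rewrite actK.
have Ez : tT y (tT z (tT x (tT y x))) = z.
  by rewrite (tw_meet_once mxy) (tw_meet_once myz).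
have K5 : forall m, Lq ([:: y; z; x; y] ++ nseq m x) (nseq m z ++ [:: y; z; x; y]).
  elim=> [|m IH]; first by rewrite cats0; exact: Lq_refl.
  have H0 : Lq ([:: y; z; x; y] ++ [:: x]) (z :: [:: y; z; x; y]).
    apply: (Lq_ctx (P:=[::]) (Q:=[::]) (passL [:: y; z; x; y] x)) => //.
    by rewrite /= Ez.
  apply: (Lq_trans (M1 := z :: [:: y; z; x; y] ++ nseq m x)).
    by apply: (Lq_ctx (P:=[::]) (Q:=nseq m x) H0).
  by apply: (Lq_ctx (P:=[:: z]) (Q:=[::]) IH); rewrite cats0.
have K6 : Lq ([:: y; z; x; y] ++ nseq n z) (z :: [:: tI z y; x; y] ++ nseq n z).
  by apply: (Lq_ctx (P:=[::]) (Q:=[:: x; y] ++ nseq n z) (Lq_elemV y z)).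
apply: (Rq_Lq_l (M1 := nseq n z ++ [:: y; z; x; y])).
  exact: (Lq_trans K1 (Lq_trans K2 (Lq_trans K3 (K5 n)))).
apply: (Rq_ext (F := fun c => tI z (iter n (tI z) c))) => //.
apply: (Rq_eq (Rq_trans (Rq_Lq_r (rot_n_L z n _) K6) (rotL _ z))) => //.
by rewrite nseqSr -!catA.
Qed.
End Core.
Lemma iotaSr m n : iota m n.+1 = iota m n ++ [:: m + n].
Proof. by rewrite -addn1 iotaD. Qed.

Section Main.
Variable S : surface.
Local Notation C := (Curve S).
Local Notation tT v := (act (tw v)).
Local Notation tI v := (act (mcg_inv (tw v))).
Variables (a : nat -> C) (N : nat).
Hypothesis Hc : is_chain a N.

Lemma dis i j : 1 <= i -> i.+2 <= j -> j <= N -> disjoint (a i) (a j).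
Proof. exact: Hc.2. Qed.
Lemma dis' i j : 1 <= i -> i.+2 <= j -> j <= N -> disjoint (a j) (a i).
Proof. by move=> *; apply: disjoint_sym; apply: dis. Qed.
Lemma mo i : 1 <= i -> i < N -> meet_once (a i) (a i.+1).
Proof. exact: Hc.1. Qed.

Definition psi l := mcg_prod [seq mcg_pow (tw (a k.*2.+1)) k.+1 | k <- rev (iota 0 l)].
Lemma psiS l : psi l.+1 = mcg_mul (mcg_pow (tw (a l.*2.+1)) l.+1) (psi l).
Proof. by rewrite /psi iotaSr rev_cat /= add0n. Qed.
Lemma act_psiS l c : act (psi l.+1) c = iter l.+1 (tT (a l.*2.+1)) (act (psi l) c).
Proof. by rewrite psiS act_mul act_pow. Qed.
Lemma psi_fix l c : (forall k, k < l -> disjoint (a k.*2.+1) c) -> act (psi l) c = c.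
Proof.
elim: l => [|l IH] H; first by rewrite /psi /= act_one.
rewrite act_psiS IH; last by move=> k Hk; apply: H; apply: ltnW.
by apply: iter_fix; apply: tw_disjoint; apply: H.
Qed.
Lemma psi_comm l u : (forall k, k < l -> disjoint (a k.*2.+1) u) ->
  forall c, act (psi l) (tT u c) = tT u (act (psi l) c).
Proof.
elim: l => [|l IH] H c; first by rewrite /psi /= !act_one.
rewrite !act_psiS IH; last by move=> k Hk; apply: H; apply: ltnW.
apply: iter_comm => d; apply: commT; exact: H.
Qed.

Lemma downS k : down a k.+1 = a k.+1 :: down a k.
Proof. by rewrite /down iotaSr rev_cat /= add1n. Qed.
Lemma upS k : up a k.+1 = up a k ++ [:: a k.+1].
Proof. by rewrite /up iotaSr map_cat /= add1n. Qed.

Lemma mapfix (F : C -> C) (g : nat -> C) s :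
  (forall i, i \in s -> F (g i) = g i) -> map F (map g s) = map g s.
Proof. by move=> H; rewrite -map_comp; apply/eq_in_map => i Hi /=; apply: H. Qed.
Lemma commR' c s : (forall i, i \in s -> disjoint c (a i)) -> Lq (c :: map a s) (map a s ++ [:: c]).
Proof.
move=> H; have := move_right c (map a s); rewrite mapfix //.
by move=> i Hi; apply: tw_disjoint; apply: H.
Qed.
Lemma commL' c s : (forall i, i \in s -> disjoint c (a i)) -> Lq (map a s ++ [:: c]) (c :: map a s).
Proof.
move=> H; have := move_left c (map a s); rewrite mapfix //.
by move=> i Hi; apply: fixI; apply: H.
Qed.

Lemma memD i l : i \in rev (iota 1 l) -> 1 <= i <= l.
Proof. by rewrite mem_rev mem_iota; lia. Qed.
Lemma memU i l : i \in iota 1 l -> 1 <= i <= l.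
Proof. by rewrite mem_iota; lia. Qed.

Lemma Px l : l.*2.+1 <= N -> act (psi l.+1) (a l.*2.+1) = a l.*2.+1.
Proof.
move=> HN; rewrite act_psiS psi_fix; first by apply: iter_fix; apply: tw_self.
move=> k Hk; apply: dis; lia.
Qed.


Lemma mainA l : l.*2.+1 <= N ->
  Rq (down a l.*2 ++ down a l.*2.+1) (act (psi l.+1))
     (nseq l.+1 (a l.*2.+1) ++ down a l.*2 ++ [seq bcurve a k.*2 | k <- rev (iota 1 l)]).
Proof.
elim: l => [|l IH] HN.
  apply: (Rq_ext (F := tT (a 1))).
    by move=> c; rewrite act_psiS /psi /= act_one.
  exact: (Rq_eq (rotR [::] (a 1))).
have HN' : l.*2.+1 <= N by rewrite doubleS in HN; lia.
rewrite doubleS in HN.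
have IH' := IH HN'.
have mxy : meet_once (a l.*2.+1) (a l.*2.+2) by apply: mo; lia.
have myz : meet_once (a l.*2.+2) (a l.*2.+3) by apply: mo; lia.
have dxz : disjoint (a l.*2.+1) (a l.*2.+3) by apply: dis; lia.
have dDy : forall i, i \in rev (iota 1 l.*2) -> disjoint (a l.*2.+2) (a i).
  by move=> i /memD Hi; apply: dis'; lia.
have dDz : forall i, i \in rev (iota 1 l.*2) -> disjoint (a l.*2.+3) (a i).
  by move=> i /memD Hi; apply: dis'; lia.
pose Dn := down a l.*2.
pose Bs := [seq bcurve a k.*2 | k <- rev (iota 1 l)].
have S1 : Lq (a l.*2.+2 :: a l.*2.+1 :: Dn ++ a l.*2.+3 :: a l.*2.+2 :: a l.*2.+1 :: Dn)
             ([:: a l.*2.+2; a l.*2.+1; a l.*2.+3; a l.*2.+2] ++ (Dn ++ a l.*2.+1 :: Dn)).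
  apply: (Lq_trans (M1 := [:: a l.*2.+2; a l.*2.+1; a l.*2.+3] ++ Dn ++ a l.*2.+2 :: a l.*2.+1 :: Dn)).
    apply: (Lq_ctx (P := [:: a l.*2.+2; a l.*2.+1]) (Q := a l.*2.+2 :: a l.*2.+1 :: Dn) (commL' dDz)).
      by rewrite -catA.
    by [].
  by apply: (Lq_ctx (P := [:: a l.*2.+2; a l.*2.+1; a l.*2.+3]) (Q := a l.*2.+1 :: Dn) (commL' dDy)); rewrite -?catA.
have Py : act (psi l.+1) (a l.*2.+2) = iter l.+1 (tT (a l.*2.+1)) (a l.*2.+2).
  by rewrite act_psiS psi_fix // => k Hk; apply: dis; lia.
have Pz : act (psi l.+1) (a l.*2.+3) = a l.*2.+3.
  by rewrite psi_fix // => k Hk; apply: dis; lia.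
have S2 : Rq ([:: a l.*2.+2; a l.*2.+1; a l.*2.+3; a l.*2.+2] ++ (Dn ++ a l.*2.+1 :: Dn))
   (act (psi l.+1))
   ([:: iter l.+1 (tT (a l.*2.+1)) (a l.*2.+2); a l.*2.+1; a l.*2.+3; iter l.+1 (tT (a l.*2.+1)) (a l.*2.+2)]
     ++ nseq l.+1 (a l.*2.+1) ++ Dn ++ Bs).
  apply: (Rq_eq (Rq_prefix [:: a l.*2.+2; a l.*2.+1; a l.*2.+3; a l.*2.+2] IH')).
    by rewrite downS.
  by rewrite /= Py Px // Pz.
have S3 : Rq ([:: iter l.+1 (tT (a l.*2.+1)) (a l.*2.+2); a l.*2.+1; a l.*2.+3; iter l.+1 (tT (a l.*2.+1)) (a l.*2.+2)]
     ++ nseq l.+1 (a l.*2.+1) ++ Dn ++ Bs) (iter l.+2 (tT (a l.*2.+3)))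
     (nseq l.+2 (a l.*2.+3) ++ [:: a l.*2.+2; a l.*2.+1; tT (a l.*2.+3) (a l.*2.+2)] ++ Dn ++ Bs).
  apply: (Rq_eq (Rq_suffix (Dn ++ Bs) (coreA mxy myz dxz l.+1))).
    by rewrite -!catA.
  rewrite map_cat /Dn /down /Bs !mapfix -?catA //.
    move=> k /memD Hk; apply: iter_fix; rewrite /bcurve.
    have H1 : disjoint (a k.*2.+1) (a l.*2.+3) by apply: dis; lia.
    rewrite -{1}(tw_disjoint H1); apply: tw_disjoint; apply/disjoint_act.
    by apply: dis'; lia.
  by move=> i Hi; apply: iter_fix; apply: tw_disjoint; apply: dDz.
have S4 : Lq (nseq l.+2 (a l.*2.+3) ++ [:: a l.*2.+2; a l.*2.+1; tT (a l.*2.+3) (a l.*2.+2)] ++ Dn ++ Bs)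
             (nseq l.+2 (a l.*2.+3) ++ (a l.*2.+2 :: a l.*2.+1 :: Dn) ++ tT (a l.*2.+3) (a l.*2.+2) :: Bs).
  have Hd : forall i, i \in rev (iota 1 l.*2) -> disjoint (tT (a l.*2.+3) (a l.*2.+2)) (a i).
    move=> i Hi.
    have H1 := dDz i Hi.
    rewrite -[a i](tw_disjoint H1); apply/disjoint_act.
    exact: dDy.
  apply: (Lq_ctx (P := nseq l.+2 (a l.*2.+3) ++ [:: a l.*2.+2; a l.*2.+1]) (Q := Bs) (commR' Hd)).
    by rewrite -!catA.
  by rewrite -!catA.
have EB : [seq bcurve a k.*2 | k <- rev (iota 1 l.+1)] = tT (a l.*2.+3) (a l.*2.+2) :: Bs.
  by rewrite iotaSr rev_cat /= add1n doubleS.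
rewrite doubleS !downS EB.
apply: (Rq_Lq_l S1).
apply: (Rq_ext (F := fun c => iter l.+2 (tT (a l.*2.+3)) (act (psi l.+1) c))).
  by move=> c; rewrite (act_psiS l.+1) doubleS.
exact: (Rq_Lq_r (Rq_trans S2 S3) S4).
Qed.

Lemma mainB l : l.*2.+1 <= N ->
  Rq (up a l.*2.+1 ++ up a l.*2) (act (mcg_inv (psi l.+1)))
     ([seq bbar a k.*2 | k <- iota 1 l] ++ (up a l.*2 ++ nseq l.+1 (a l.*2.+1))).
Proof.
elim: l => [|l IH] HN.
  apply: (Rq_ext (F := tI (a 1))).
    by move=> c; rewrite psiS act_invM act_inv_pow; apply: esym; exact: act_inv1.
  exact: (Rq_eq (rotL [::] (a 1))).
have HN' : l.*2.+1 <= N by rewrite doubleS in HN; lia.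
rewrite doubleS in HN.
have IH' := IH HN'.
have mxy : meet_once (a l.*2.+1) (a l.*2.+2) by apply: mo; lia.
have myz : meet_once (a l.*2.+2) (a l.*2.+3) by apply: mo; lia.
have dxz : disjoint (a l.*2.+1) (a l.*2.+3) by apply: dis; lia.
have dDy : forall i, i \in iota 1 l.*2 -> disjoint (a l.*2.+2) (a i).
  by move=> i /memU Hi; apply: dis'; lia.
have dDz : forall i, i \in iota 1 l.*2 -> disjoint (a l.*2.+3) (a i).
  by move=> i /memU Hi; apply: dis'; lia.
pose Up := up a l.*2.
pose Bb := [seq bbar a k.*2 | k <- iota 1 l].
have S1 : Lq (Up ++ [:: a l.*2.+1; a l.*2.+2; a l.*2.+3] ++ Up ++ [:: a l.*2.+1; a l.*2.+2])
             ((Up ++ [:: a l.*2.+1] ++ Up) ++ [:: a l.*2.+2; a l.*2.+3; a l.*2.+1; a l.*2.+2]).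
  apply: (Lq_trans (M1 := Up ++ [:: a l.*2.+1; a l.*2.+2] ++ Up ++ [:: a l.*2.+3; a l.*2.+1; a l.*2.+2])).
    apply: (Lq_ctx (P := Up ++ [:: a l.*2.+1; a l.*2.+2]) (Q := [:: a l.*2.+1; a l.*2.+2]) (commR' dDz)).
      by rewrite -!catA.
    by rewrite -!catA.
  apply: (Lq_ctx (P := Up ++ [:: a l.*2.+1]) (Q := [:: a l.*2.+3; a l.*2.+1; a l.*2.+2]) (commR' dDy)).
    by rewrite -!catA.
  by rewrite -!catA.
have Py : act (mcg_inv (psi l.+1)) (a l.*2.+2) = iter l.+1 (tI (a l.*2.+1)) (a l.*2.+2).
  rewrite psiS act_invM act_inv_pow; apply: invfix; apply: psi_fix => k Hk.
  rewrite -(act_pow (mcg_inv (tw (a l.*2.+1))) l.+1).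
  have H1 : disjoint (a l.*2.+1) (a k.*2.+1) by apply: dis'; lia.
  have H2 : act (mcg_pow (mcg_inv (tw (a l.*2.+1))) l.+1) (a k.*2.+1) = a k.*2.+1.
    by rewrite act_pow; apply: iter_fix; apply: fixI.
  rewrite -{1}H2; apply/disjoint_act; apply: dis; lia.
have Px' : act (mcg_inv (psi l.+1)) (a l.*2.+1) = a l.*2.+1.
  by apply: invfix; apply: Px.
have Pz : act (mcg_inv (psi l.+1)) (a l.*2.+3) = a l.*2.+3.
  by apply: invfix; rewrite psi_fix // => k Hk; apply: dis; lia.
have S2 : Rq ((Up ++ [:: a l.*2.+1] ++ Up) ++ [:: a l.*2.+2; a l.*2.+3; a l.*2.+1; a l.*2.+2])
   (act (mcg_inv (psi l.+1)))
   ((Bb ++ Up) ++ nseq l.+1 (a l.*2.+1) ++ [:: iter l.+1 (tI (a l.*2.+1)) (a l.*2.+2); a l.*2.+3; a l.*2.+1;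
      iter l.+1 (tI (a l.*2.+1)) (a l.*2.+2)]).
  apply: (Rq_eq (Rq_suffix [:: a l.*2.+2; a l.*2.+3; a l.*2.+1; a l.*2.+2] IH')).
    by rewrite upS -!catA.
  by rewrite /= Py Px' Pz -!catA.
have S3 : Rq ((Bb ++ Up) ++ nseq l.+1 (a l.*2.+1) ++ [:: iter l.+1 (tI (a l.*2.+1)) (a l.*2.+2); a l.*2.+3; a l.*2.+1;
      iter l.+1 (tI (a l.*2.+1)) (a l.*2.+2)]) (iter l.+2 (tI (a l.*2.+3)))
     ((Bb ++ Up) ++ [:: tI (a l.*2.+3) (a l.*2.+2); a l.*2.+1; a l.*2.+2] ++ nseq l.+2 (a l.*2.+3)).
  apply: (Rq_eq (Rq_prefix (Bb ++ Up) (coreB mxy myz dxz l.+1))) => //.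
  rewrite map_cat /Bb /Up /up !mapfix //.
    by move=> i Hi; apply: iter_fix; apply: fixI; apply: dDz.
  move=> k /memU Hk; apply: iter_fix; rewrite /bbar.
  have H1 : disjoint (a k.*2.+1) (a l.*2.+3) by apply: dis; lia.
  rewrite -{1}(fixI H1); apply: fixI; apply/disjoint_act.
  by apply: dis'; lia.
have Hd : forall i, i \in iota 1 l.*2 -> disjoint (tI (a l.*2.+3) (a l.*2.+2)) (a i).
  move=> i Hi.
  have H1 := dDz i Hi.
  rewrite -[a i](fixI H1); apply/disjoint_act.
  exact: dDy.
have S4 : Lq ((Bb ++ Up) ++ [:: tI (a l.*2.+3) (a l.*2.+2); a l.*2.+1; a l.*2.+2] ++ nseq l.+2 (a l.*2.+3))
             ((Bb ++ [:: tI (a l.*2.+3) (a l.*2.+2)]) ++ ((Up ++ [:: a l.*2.+1; a l.*2.+2]) ++ nseq l.+2 (a l.*2.+3))).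
  apply: (Lq_ctx (P := Bb) (Q := [:: a l.*2.+1; a l.*2.+2] ++ nseq l.+2 (a l.*2.+3)) (commL' Hd)).
    by rewrite -!catA.
  by rewrite -!catA.
have EB : [seq bbar a k.*2 | k <- iota 1 l.+1] = Bb ++ [:: tI (a l.*2.+3) (a l.*2.+2)].
  by rewrite iotaSr map_cat /= add1n doubleS.
have EU : up a l.*2.+2 = Up ++ [:: a l.*2.+1; a l.*2.+2].
  by rewrite !upS -catA.
have EU3 : up a l.*2.+3 = Up ++ [:: a l.*2.+1; a l.*2.+2; a l.*2.+3].
  by rewrite upS EU -catA.
rewrite doubleS EB EU EU3.
apply: (Rq_Lq_l (M1 := (Up ++ [:: a l.*2.+1] ++ Up) ++ [:: a l.*2.+2; a l.*2.+3; a l.*2.+1; a l.*2.+2])).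
  apply: (Lq_ctx (P := [::]) (Q := [::]) S1); by rewrite ?cats0 -?catA.
apply: (Rq_ext (F := fun c => iter l.+2 (tI (a l.*2.+3)) (act (mcg_inv (psi l.+1)) c))).
  move=> c; rewrite (psiS l.+1) act_invM act_inv_pow doubleS.
  apply: iter_comm => d.
  apply: inv_comm => e; apply: esym; apply: psi_comm => k Hk; apply: dis; lia.
exact: (Rq_Lq_r (Rq_trans S2 S3) S4).
Qed.

End Main.

Theorem lemma3p4 (Sf : surface) (l : nat) (a : nat -> Curve Sf) (D E : word Sf) :
  1 <= l -> is_chain a l.*2.+1 ->
  simC (D ++ down a l.*2 ++ down a l.*2.+1 ++ E)
       (conjw (phi a l) D
          ++ (nseq l.+1 (a l.*2.+1) ++ down a l.*2)
          ++ [seq bcurve a k.*2 | k <- rev (iota 1 l)]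
          ++ conjw (phi a l) E)
  /\
  simC (D ++ up a l.*2.+1 ++ up a l.*2 ++ E)
       (conjw (mcg_inv (phi a l)) D
          ++ [seq bbar a k.*2 | k <- iota 1 l]
          ++ (up a l.*2 ++ nseq l.+1 (a l.*2.+1))
          ++ conjw (mcg_inv (phi a l)) E).
Proof.
move=> _ Hc; split.
- have H := mainA Hc (leqnn _) D E.
  rewrite -!catA in H; rewrite /conjw -!catA; exact: H.
- have H := mainB Hc (leqnn _) D E.
  rewrite -!catA in H; rewrite /conjw -!catA; exact: H.
Qed.
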